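(* Let $\mathbf{A}$ be a countable UL-chain and let $\mathscr{K}_2$ be the class of all finite $\mathbf{A}$-structures $\langle\mathbf{A},\mathbf{M}\rangle$ in the language with a single binary relation symbol $<$ such that for all $a,b,c\in M$: $\|a<a\|^{\mathbf{A}}_{\mathbf{M}}\ge\bar 1$; $\|(a<b\wedge b<c)\to a<c\|^{\mathbf{A}}_{\mathbf{M}}\ge\bar 1$; and $\|a<b\vee b<a\|^{\mathbf{A}}_{\mathbf{M}}\ge\bar 1$. Then $\mathscr{K}_2^{\cong}$ is a Fraïssé class, i.e. a countable set of finitely generated $\mathbf{A}$-structures having the hereditary property, the joint embedding property and the amalgamation property.
   Context: A UL-algebra is $\mathbf{A}=\langle A,\wedge,\vee,\&,\to,\bar 0,\bar 1,\bot,\top\rangle$ where $\langle A,\wedge,\vee,\bot,\top\rangle$ is a bounded lattice, $\langle A,\&,\bar 1\rangle$ is a commutative monoid, $a\& b\le c$ iff $b\le a\to c$, and $((a\to b)\wedge\bar 1)\vee((b\to a)\wedge \bar 1)=\bar 1$; a UL-chain is one with linear order. An $\mathbf{A}$-structure for $\{<\}$ is a set $M$ with a function $<_{\mathbf{M}}:M^2\to A$, $\|a<b\|^{\mathbf{A}}_{\mathbf{M}}=<_{\mathbf{M}}(a,b)$, compound formulas evaluated by the operations of $\mathbf{A}$. Substructure: subset with restricted relation. Embedding: injective map preserving the values of $<$, identity on $\mathbf{A}$; isomorphism: surjective embedding. $\mathscr{K}^{\cong}$: one representative of each isomorphism type in $\mathscr{K}$. Hereditary property: closed under substructures (up to isomorphism).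 Joint embedding property: any two members embed into a common member. Amalgamation property: whenever $\mathbf{M}_0$ is a substructure of both $\mathbf{M}_1$ and $\mathbf{M}_2$, all in the class, there are a member $\mathbf{M}_3$ and embeddings $f_1:\mathbf{M}_1\to\mathbf{M}_3$, $f_2:\mathbf{M}_2\to\mathbf{M}_3$ agreeing on $M_0$. *)

(* Defs.v *)
From Stdlib Require Import List.

Record ULAlg := {
  car :> Type;
  meet : car -> car -> car;
  join : car -> car -> car;
  mul : car -> car -> car;
  imp : car -> car -> car;
  zero1 : car;
  one1 : car;
  bot : car;
  top : car
}.

Definition le (A : ULAlg) (x y : A) : Prop := meet A x y = x.

Definition is_UL_algebra (A : ULAlg) : Prop :=
  (forall x y z : A, meet A x (meet A y z) = meet A (meet A x y) z) /\
  (forall x y z : A, join A x (join A y z) = join A (join A x y) z) /\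
  (forall x y : A, meet A x y = meet A y x) /\
  (forall x y : A, join A x y = join A y x) /\
  (forall x y : A, meet A x (join A x y) = x) /\
  (forall x y : A, join A x (meet A x y) = x) /\
  (forall x : A, join A (bot A) x = x) /\
  (forall x : A, meet A (top A) x = x) /\
  (forall x y z : A, mul A x (mul A y z) = mul A (mul A x y) z) /\
  (forall x y : A, mul A x y = mul A y x) /\
  (forall x : A, mul A (one1 A) x = x) /\
  (forall a b c : A, le A (mul A a b) c <-> le A b (imp A a c)) /\
  (forall a b : A, join A (meet A (imp A a b) (one1 A)) (meet A (imp A b a) (one1 A)) = one1 A).

Definition is_UL_chain (A : ULAlg) : Prop :=
  is_UL_algebra A /\ forall x y : A, le A x y \/ le A y x.

Definition countable_carrier (A : ULAlg) : Prop :=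
  exists e : nat -> A, forall x : A, exists n, e n = x.

Record Astr (A : ULAlg) := {
  dom : Type;
  rel : dom -> dom -> A
}.
Arguments dom {A} _.
Arguments rel {A} _ _ _.

Definition finite_str {A : ULAlg} (M : Astr A) : Prop :=
  exists l : list (dom M), forall x, In x l.

Definition substr {A : ULAlg} (M : Astr A) (P : dom M -> Prop) : Astr A :=
  {| dom := {x : dom M | P x};
     rel := fun a b => rel M (proj1_sig a) (proj1_sig b) |}.

Definition is_embedding {A : ULAlg} (M N : Astr A) (f : dom M -> dom N) : Prop :=
  (forall a b, f a = f b -> a = b) /\
  (forall a b, rel N (f a) (f b) = rel M a b).

Definition isomorphic {A : ULAlg} (M N : Astr A) : Prop :=
  exists f : dom M -> dom N, is_embedding M N f /\ forall y, exists x, f x = y.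

Definition K2 (A : ULAlg) (M : Astr A) : Prop :=
  finite_str M /\
  (forall a : dom M, le A (one1 A) (rel M a a)) /\
  (forall a b c : dom M,
      le A (one1 A) (imp A (meet A (rel M a b) (rel M b c)) (rel M a c))) /\
  (forall a b : dom M, le A (one1 A) (join A (rel M a b) (rel M b a))).

(* K^{cong} is a Fraisse class, phrased on the isomorphism-closed class K:
   countably many isomorphism types, all finitely generated (= finite, the
   language is relational), HP, JEP, AP. *)
Definition Fraisse_class {A : ULAlg} (K : Astr A -> Prop) : Prop :=
  (exists e : nat -> Astr A,
      (forall n, K (e n)) /\ (forall M, K M -> exists n, isomorphic M (e n))) /\
  (forall M, K M -> finite_str M) /\
  (forall M (P : dom M -> Prop), K M ->
      exists N, K N /\ isomorphic (substr M P) N) /\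
  (forall M1 M2, K M1 -> K M2 ->
      exists M3 (f1 : dom M1 -> dom M3) (f2 : dom M2 -> dom M3),
        K M3 /\ is_embedding M1 M3 f1 /\ is_embedding M2 M3 f2) /\
  (forall M0 M1 M2 (g1 : dom M0 -> dom M1) (g2 : dom M0 -> dom M2),
      K M0 -> K M1 -> K M2 ->
      is_embedding M0 M1 g1 -> is_embedding M0 M2 g2 ->
      exists M3 (f1 : dom M1 -> dom M3) (f2 : dom M2 -> dom M3),
        K M3 /\ is_embedding M1 M3 f1 /\ is_embedding M2 M3 f2 /\
        forall x : dom M0, f1 (g1 x) = f2 (g2 x)).

(* Main.v *)
Require Import Defs.
From Stdlib Require Import Classical ClassicalEpsilon ProofIrrelevance List Lia Cantor.

Section Chain.
Variable A : ULAlg.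
Hypothesis HA : is_UL_chain A.

Notation le := (Defs.le A).
Notation meet := (meet A).
Notation join := (join A).
Notation o := (one1 A).

Lemma HAl : is_UL_algebra A. Proof. apply HA. Qed.

Lemma meet_assoc x y z : meet x (meet y z) = meet (meet x y) z.
Proof. destruct HA as [H _]; apply H. Qed.
Lemma meet_comm x y : meet x y = meet y x.
Proof. destruct HA as [[_ [_ [H _]]] _]; apply H. Qed.
Lemma join_comm x y : join x y = join y x.
Proof. destruct HA as [[_ [_ [_ [H _]]]] _]; apply H. Qed.
Lemma absorb1 x y : meet x (join x y) = x.
Proof. destruct HA as [[_ [_ [_ [_ [H _]]]]] _]; apply H. Qed.
Lemma absorb2 x y : join x (meet x y) = x.
Proof. destruct HA as [[_ [_ [_ [_ [_ [H _]]]]]] _]; apply H. Qed.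
Lemma join_bot x : join (bot A) x = x.
Proof. destruct HA as [[_ [_ [_ [_ [_ [_ [H _]]]]]]] _]; apply H. Qed.
Lemma meet_top x : meet (top A) x = x.
Proof. destruct HA as [[_ [_ [_ [_ [_ [_ [_ [H _]]]]]]]] _]; apply H. Qed.
Lemma mul_comm x y : mul A x y = mul A y x.
Proof. destruct HA as [[_ [_ [_ [_ [_ [_ [_ [_ [_ [H _]]]]]]]]]] _]; apply H. Qed.
Lemma mul_one x : mul A o x = x.
Proof. destruct HA as [[_ [_ [_ [_ [_ [_ [_ [_ [_ [_ [H _]]]]]]]]]]] _]; apply H. Qed.
Lemma resid a b c : le (mul A a b) c <-> le b (imp A a c).
Proof. destruct HA as [[_ [_ [_ [_ [_ [_ [_ [_ [_ [_ [_ [H _]]]]]]]]]]]] _]; apply H. Qed.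
Lemma le_total x y : le x y \/ le y x.
Proof. destruct HA as [_ H]; apply H. Qed.

Lemma le_refl x : le x x.
Proof. unfold Defs.le. transitivity (meet x (join x (meet x x))).
  - rewrite absorb2; reflexivity. - apply absorb1. Qed.
Lemma le_trans x y z : le x y -> le y z -> le x z.
Proof. unfold Defs.le; intros H1 H2. rewrite <- H1, <- meet_assoc, H2. reflexivity. Qed.
Lemma le_antisym x y : le x y -> le y x -> x = y.
Proof. unfold Defs.le; intros H1 H2. rewrite <- H1, meet_comm. exact H2. Qed.
Lemma meet_l x y : le (meet x y) x.
Proof. unfold Defs.le. rewrite (meet_comm (meet x y) x), meet_assoc.
  f_equal. apply le_refl. Qed.
Lemma meet_r x y : le (meet x y) y.
Proof. rewrite meet_comm; apply meet_l. Qed.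
Lemma meet_glb x y z : le z x -> le z y -> le z (meet x y).
Proof. unfold Defs.le; intros H1 H2. rewrite meet_assoc, H1, H2. reflexivity. Qed.
Lemma meet_eq_l x y : le x y -> meet x y = x.
Proof. auto. Qed.
Lemma meet_eq_r x y : le y x -> meet x y = y.
Proof. intro; rewrite meet_comm; auto. Qed.
Lemma join_eq_r x y : le x y -> join x y = y.
Proof. intro H. unfold Defs.le in H. rewrite <- H, join_comm, meet_comm. apply absorb2. Qed.
Lemma join_eq_l x y : le y x -> join x y = x.
Proof. intro; rewrite join_comm; apply join_eq_r; auto. Qed.
Lemma le_top x : le x (top A).
Proof. unfold Defs.le. rewrite meet_comm. apply meet_top. Qed.
Lemma bot_le x : le (bot A) x.
Proof. unfold Defs.le. rewrite <- (join_bot x). apply absorb1. Qed.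
Lemma join_ub_l x y : le x (join x y).
Proof. unfold Defs.le. apply absorb1. Qed.
Lemma join_ub_r x y : le y (join x y).
Proof. rewrite join_comm; apply join_ub_l. Qed.

Lemma nle_le x y : ~ le x y -> le y x.
Proof. destruct (le_total x y); tauto. Qed.

Lemma meet_le_inv x y z : le (meet x y) z -> le x z \/ le y z.
Proof. destruct (le_total x y) as [H|H].
  - rewrite meet_eq_l by auto; auto. - rewrite meet_eq_r by auto; auto. Qed.
Lemma nmeet_le_inv x y z : ~ le (meet x y) z -> ~ le x z /\ ~ le y z.
Proof. intro H; split; intro H'; apply H; eapply le_trans; [apply meet_l| exact H' | apply meet_r | exact H']. Qed.
Lemma le_meet_inv x y z : le z (meet x y) -> le z x /\ le z y.
Proof. intro H; split; (eapply le_trans; [exact H|]); [apply meet_l|apply meet_r]. Qed.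
Lemma nle_meet_inv x y z : ~ le z (meet x y) -> ~ le z x \/ ~ le z y.
Proof. intro H. destruct (classic (le z x)); destruct (classic (le z y)); auto.
  exfalso; apply H; apply meet_glb; auto. Qed.
Lemma le_join_inv x y z : le z (join x y) -> le z x \/ le z y.
Proof. destruct (le_total x y) as [H|H].
  - rewrite join_eq_r by auto; auto. - rewrite join_eq_l by auto; auto. Qed.
Lemma join_le_inv x y z : le (join x y) z -> le x z /\ le y z.
Proof. intro H; split; (eapply le_trans; [|exact H]); [apply join_ub_l|apply join_ub_r]. Qed.
Lemma join_lub x y z : le x z -> le y z -> le (join x y) z.
Proof. destruct (le_total x y) as [H|H].
  - rewrite join_eq_r by auto; auto. - rewrite join_eq_l by auto; auto. Qed.
Lemma njoin_le_inv x y z : ~ le (join x y) z -> ~ le x z \/ ~ le y z.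
Proof. intro H. destruct (classic (le x z)); destruct (classic (le y z)); auto.
  exfalso; apply H; apply join_lub; auto. Qed.
Lemma nle_join_inv x y z : ~ le z (join x y) -> ~ le z x /\ ~ le z y.
Proof. intro H; split; intro H'; apply H; (eapply le_trans; [exact H'|]); [apply join_ub_l|apply join_ub_r]. Qed.

Lemma trans_iff x y z : le o (imp A (meet x y) z) <-> le (meet x y) z.
Proof. rewrite <- resid, mul_comm, mul_one. tauto. Qed.

End Chain.

Ltac norm1 HA :=
  match goal with
  | H : Defs.le ?A (Defs.meet ?A ?x ?y) ?z |- _ =>
      destruct (meet_le_inv A HA x y z H); clear H
  | H : ~ Defs.le ?A (Defs.meet ?A ?x ?y) ?z |- _ =>
      destruct (nmeet_le_inv A HA x y z H); clear H
  | H : Defs.le ?A ?z (Defs.meet ?A ?x ?y) |- _ =>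
      destruct (le_meet_inv A HA x y z H); clear H
  | H : ~ Defs.le ?A ?z (Defs.meet ?A ?x ?y) |- _ =>
      destruct (nle_meet_inv A HA x y z H); clear H
  | H : Defs.le ?A (Defs.join ?A ?x ?y) ?z |- _ =>
      destruct (join_le_inv A HA x y z H); clear H
  | H : ~ Defs.le ?A (Defs.join ?A ?x ?y) ?z |- _ =>
      destruct (njoin_le_inv A HA x y z H); clear H
  | H : Defs.le ?A ?z (Defs.join ?A ?x ?y) |- _ =>
      destruct (le_join_inv A HA x y z H); clear H
  | H : ~ Defs.le ?A ?z (Defs.join ?A ?x ?y) |- _ =>
      destruct (nle_join_inv A HA x y z H); clear H
  | H : _ \/ _ |- _ => destruct H
  | H : _ /\ _ |- _ => destruct H
  | H : ~ Defs.le ?A (bot ?A) _ |- _ => exfalso; apply H; apply bot_le; exact HA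
  | H : ~ Defs.le ?A _ (top ?A) |- _ => exfalso; apply H; apply le_top; exact HA
  | H : ~ Defs.le ?A ?x ?x |- _ => exfalso; apply H; apply le_refl; exact HA
  end.

Ltac negs HA :=
  repeat match goal with
  | H : ~ Defs.le ?A ?x ?y |- _ =>
      lazymatch goal with
      | _ : Defs.le A y x |- _ => fail
      | _ => pose proof (nle_le A HA x y H)
      end
  end.

Ltac reach HA n :=
  match goal with
  | |- Defs.le ?A ?u ?u => apply (le_refl A HA)
  | |- Defs.le ?A ?u ?v =>
    first [ assumption
          | match n with
            | S ?m => match goal with
                      | H : Defs.le A u ?w |- _ =>
                          apply (le_trans A HA u w v H); reach HA m
                      end
            end ]
  end.

Ltac atomic HA :=
  match goal with
  | H : ~ Defs.le ?A ?u ?v |- False =>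
      apply H; clear H; solve [reach HA 8]
  end.

Ltac chain HA :=
  try (match goal with |- Defs.le _ _ _ => apply NNPP; intro end);
  repeat norm1 HA; negs HA; atomic HA.

Lemma K2_tr (A : ULAlg) (HA : is_UL_chain A) (M : Astr A) : K2 A M ->
  forall a b c, Defs.le A (meet A (rel M a b) (rel M b c)) (rel M a c).
Proof. intros [_ [_ [H _]]] a b c. apply (trans_iff A HA). apply H. Qed.
Lemma K2_tot (A : ULAlg) (HA : is_UL_chain A) (M : Astr A) : K2 A M ->
  forall a b, Defs.le A (one1 A) (rel M a b) \/ Defs.le A (one1 A) (rel M b a).
Proof. intros [_ [_ [_ H]]] a b. apply (le_join_inv A HA). apply H. Qed.

Lemma finite_sig (T : Type) (P : T -> Prop) (l : list T) :
  (forall x, In x l) -> exists l' : list {x | P x}, forall x, In x l'.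
Proof.
  intro Hl.
  exists (fold_right (fun y acc => match excluded_middle_informative (P y) with
     | left p => exist P y p :: acc | right _ => acc end) nil l).
  intros [x px]. generalize (Hl x). clear Hl. induction l as [|y l IH]; simpl; [tauto|].
  intros [->|Hin].
  - destruct excluded_middle_informative as [p|n]; [|contradiction].
    left. f_equal. apply proof_irrelevance.
  - destruct excluded_middle_informative; [right|]; auto.
Qed.

Section AP.
Variable A : ULAlg.
Hypothesis HA : is_UL_chain A.
Variables M0 M1 M2 : Astr A.
Variables (g1 : dom M0 -> dom M1) (g2 : dom M0 -> dom M2).
Hypothesis K0 : K2 A M0.
Hypothesis K1 : K2 A M1.
Hypothesis K2' : K2 A M2.
Hypothesis E1 : is_embedding M0 M1 g1.
Hypothesis E2 : is_embedding M0 M2 g2.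
Variable l0 : list (dom M0).
Hypothesis Hl0 : forall z, In z l0.

Notation le := (Defs.le A).
Notation meet := (meet A).
Notation join := (join A).
Notation o := (one1 A).
Notation r1 := (rel M1).
Notation r2 := (rel M2).

Let letr x y z : le x y -> le y z -> le x z := le_trans A HA x y z.
Let lerefl x : le x x := le_refl A HA x.
Let mel x y : le (meet x y) x := meet_l A HA x y.
Let mer x y : le (meet x y) y := meet_r A HA x y.
Let letop x : le x (top A) := le_top A HA x.
Let botle x : le (bot A) x := bot_le A HA x.
Let jul x y : le x (join x y) := join_ub_l A HA x y.
Let jur x y : le y (join x y) := join_ub_r A HA x y.

Lemma compat w w' : r1 (g1 w) (g1 w') = r2 (g2 w) (g2 w').
Proof. destruct E1 as [_ H1]; destruct E2 as [_ H2]; rewrite H1, H2; reflexivity. Qed.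

Definition gimp (u v : A) : A :=
  if excluded_middle_informative (le u v) then top A else v.

Lemma gimp_spec t u v : le t (gimp u v) <-> le (meet t u) v.
Proof.
  unfold gimp; destruct excluded_middle_informative as [H|H]; split; intro H'.
  - eapply letr; [apply mer| exact H].
  - apply le_top; exact HA.
  - chain HA.
  - chain HA.
Qed.

Lemma gimp_lt u v : ~ le o (gimp u v) -> ~ le u v /\ gimp u v = v.
Proof.
  unfold gimp; destruct excluded_middle_informative as [H|H]; intro H'.
  - exfalso; apply H'; apply le_top; exact HA.
  - auto.
Qed.

Definition term a b w :=
  meet (gimp (r2 b (g2 w)) (r1 a (g1 w))) (gimp (r1 (g1 w) a) (r2 (g2 w) b)).
Definition U a b := fold_right (fun w acc => meet (term a b w) acc) (top A) l0.
Definition Cv b a :=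
  fold_right (fun w acc => join (meet (r2 b (g2 w)) (r1 (g1 w) a)) acc) (bot A) l0.
Definition chi a b := if excluded_middle_informative (le o (U a b)) then bot A else o.
Definition Sv b a := join (Cv b a) (chi a b).

Lemma U_le a b w : le (U a b) (term a b w).
Proof.
  unfold U. generalize (Hl0 w). clear Hl0. induction l0 as [|x l IH]; simpl; [tauto|].
  intros [->|Hin].
  - apply meet_l; exact HA.
  - eapply letr; [apply mer| apply IH; exact Hin].
Qed.

Lemma U_glb a b v : (forall w, le v (term a b w)) -> le v (U a b).
Proof.
  intro H. unfold U. clear Hl0. induction l0 as [|x l IH]; simpl.
  - apply le_top; exact HA.
  - apply meet_glb; auto.
Qed.

Lemma U_attain a b : U a b = top A \/ exists w, U a b = term a b w.
Proof.
  unfold U. clear Hl0. induction l0 as [|x l IH]; simpl; [auto|].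
  destruct (le_total A HA (term a b x) (fold_right (fun w acc => meet (term a b w) acc) (top A) l)) as [H|H].
  - rewrite meet_eq_l by auto. eauto.
  - rewrite meet_eq_r by auto. destruct IH as [E|[w E]]; rewrite E in *; eauto.
    all: try (right; exists x; apply le_antisym; auto; apply le_top; auto).
Qed.

Lemma Cv_ge b a w : le (meet (r2 b (g2 w)) (r1 (g1 w) a)) (Cv b a).
Proof.
  unfold Cv. generalize (Hl0 w). clear Hl0. induction l0 as [|x l IH]; simpl; [tauto|].
  intros [->|Hin].
  - apply jul.
  - eapply letr; [| apply jur]; auto.
Qed.

Lemma Cv_attain b a : Cv b a = bot A \/ exists w, Cv b a = meet (r2 b (g2 w)) (r1 (g1 w) a).
Proof.
  unfold Cv. clear Hl0. induction l0 as [|x l IH]; simpl; [auto|].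
  destruct (le_total A HA (meet (r2 b (g2 x)) (r1 (g1 x) a)) (fold_right (fun w acc => join (meet (r2 b (g2 w)) (r1 (g1 w) a)) acc) (bot A) l)) as [H|H].
  - rewrite join_eq_r by auto. destruct IH as [E|[w E]]; rewrite E in *; eauto.
    all: try (right; exists x; apply le_antisym; auto; apply bot_le; auto).
  - rewrite join_eq_l by auto. eauto.
Qed.

Lemma F1a a b w : le (meet (U a b) (r2 b (g2 w))) (r1 a (g1 w)).
Proof.
  pose proof (U_le a b w) as H. unfold term in H.
  pose proof (proj1 (gimp_spec _ _ _) (le_refl A HA (gimp (r2 b (g2 w)) (r1 a (g1 w))))).
  chain HA.
Qed.

Lemma F1b a b w : le (meet (r1 (g1 w) a) (U a b)) (r2 (g2 w) b).
Proof.
  pose proof (U_le a b w) as H. unfold term in H.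
  pose proof (proj1 (gimp_spec _ _ _) (le_refl A HA (gimp (r1 (g1 w) a) (r2 (g2 w) b)))).
  chain HA.
Qed.

Lemma F2 a b v : (forall w, le (meet v (r2 b (g2 w))) (r1 a (g1 w)) /\
                           le (meet (r1 (g1 w) a) v) (r2 (g2 w) b)) -> le v (U a b).
Proof.
  intro H. apply U_glb. intro w. destruct (H w) as [H1 H2]. unfold term.
  apply meet_glb; auto; apply gimp_spec; auto. rewrite meet_comm; auto.
Qed.

Lemma W a b : ~ le o (U a b) -> exists w,
   (~ le (r2 b (g2 w)) (r1 a (g1 w)) /\ le (U a b) (r1 a (g1 w)) /\ ~ le o (r1 a (g1 w))) \/
   (~ le (r1 (g1 w) a) (r2 (g2 w) b) /\ le (U a b) (r2 (g2 w) b) /\ ~ le o (r2 (g2 w) b)).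
Proof.
  intro H. destruct (U_attain a b) as [E|[w E]].
  - exfalso; apply H; rewrite E; apply le_top; auto.
  - exists w. pose proof (U_le a b w) as Hu. rewrite E in H. unfold term in *.
    destruct (nle_meet_inv A HA _ _ _ H) as [H'|H'];
      destruct (gimp_lt _ _ H') as [H1 H2]; rewrite H2 in *.
    + left; split; [auto|split; [rewrite E; apply mel|auto]].
    + right; split; [auto|split; [rewrite E; apply mer|auto]].
Qed.


Let t1 := K2_tr A HA M1 K1.
Let t2 := K2_tr A HA M2 K2'.
Let tot1 := K2_tot A HA M1 K1.
Let tot2 := K2_tot A HA M2 K2'.

Lemma case1 a a' b : le (meet (r1 a a') (U a' b)) (U a b).
Proof.
  apply F2; intro w; split.
  - pose proof (F1a a' b w); pose proof (t1 a a' (g1 w)); chain HA.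
  - pose proof (F1b a' b w); pose proof (t1 (g1 w) a a'); chain HA.
Qed.

Lemma case2 a z b : le (meet (r1 a (g1 z)) (r2 (g2 z) b)) (U a b).
Proof.
  apply F2; intro w; split.
  - pose proof (t2 (g2 z) b (g2 w)); pose proof (t1 a (g1 z) (g1 w)).
    rewrite <- compat in *. chain HA.
  - pose proof (t1 (g1 w) a (g1 z)); pose proof (t2 (g2 w) (g2 z) b).
    rewrite <- compat in *. chain HA.
Qed.

Lemma case3 a b b' : le (meet (U a b) (r2 b b')) (U a b').
Proof.
  apply F2; intro w; split.
  - pose proof (F1a a b w); pose proof (t2 b b' (g2 w)); chain HA.
  - pose proof (F1b a b w); pose proof (t2 (g2 w) b b'); chain HA.
Qed.

Lemma case4_gen a a' b R
  (H1 : forall w, le (meet R (r2 b (g2 w))) (r1 a (g1 w)))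
  (H2 : forall w, le (meet (r1 (g1 w) a) R) (r2 (g2 w) b)) :
  le (meet R (Sv b a')) (r1 a a').
Proof.
  assert (Ho : ~ le o (U a' b) -> le (meet R o) (r1 a a')).
  { intro Hc. destruct (W a' b Hc) as [w [[X1 [X2 X3]]|[X1 [X2 X3]]]].
    - pose proof (H1 w); pose proof (t1 a' a (g1 w)); pose proof (tot1 a' a);
      pose proof (tot1 a' (g1 w)); pose proof (t1 a (g1 w) a'). chain HA.
    - pose proof (tot2 (g2 w) b); pose proof (H1 w); pose proof (t1 a (g1 w) a');
      pose proof (H2 w); pose proof (t1 (g1 w) a' a); pose proof (tot1 a a'). chain HA. }
  unfold Sv, chi. destruct excluded_middle_informative as [Hc|Hc].
  - destruct (Cv_attain b a') as [E|[w E]]; rewrite E.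
    + chain HA.
    + pose proof (H1 w); pose proof (t1 a (g1 w) a'). chain HA.
  - specialize (Ho Hc). destruct (Cv_attain b a') as [E|[w E]]; rewrite E.
    + chain HA.
    + pose proof (H1 w); pose proof (t1 a (g1 w) a'). chain HA.
Qed.

Lemma case6_gen a a' b rho sigma
  (HC : forall w, le (meet (r2 b (g2 w)) (r1 (g1 w) a')) sigma)
  (Hx : ~ le o rho -> le o sigma)
  (H1 : le (meet (r1 a a') rho) (U a b)) :
  le (meet (Sv b a) (r1 a a')) sigma.
Proof.
  assert (Ho : ~ le o (U a b) -> le (meet o (r1 a a')) sigma).
  { intro Hc. destruct (classic (le o rho)) as [Hr|Hr]; [|specialize (Hx Hr); chain HA].
    destruct (W a b Hc) as [w [[X1 [X2 X3]]|[X1 [X2 X3]]]].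
    - pose proof (tot1 a (g1 w)); pose proof (HC w); pose proof (t1 (g1 w) a a'). chain HA.
    - pose proof (tot2 (g2 w) b); pose proof (HC w); pose proof (t1 (g1 w) a a'). chain HA. }
  unfold Sv, chi. destruct excluded_middle_informative as [Hc|Hc].
  - destruct (Cv_attain b a) as [E|[w E]]; rewrite E.
    + chain HA.
    + pose proof (HC w); pose proof (t1 (g1 w) a a'). chain HA.
  - specialize (Ho Hc). destruct (Cv_attain b a) as [E|[w E]]; rewrite E.
    + chain HA.
    + pose proof (HC w); pose proof (t1 (g1 w) a a'). chain HA.
Qed.

Lemma case5 a b b' : le (meet (Sv b a) (U a b')) (r2 b b').
Proof.
  assert (Ho : ~ le o (U a b) -> le (meet o (U a b')) (r2 b b')).
  { intro Hc. destruct (W a b Hc) as [w [[X1 [X2 X3]]|[X1 [X2 X3]]]].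
    - pose proof (F1a a b' w); pose proof (t2 b' b (g2 w)); pose proof (tot2 b b');
      pose proof (tot1 a (g1 w)); pose proof (F1b a b' w); pose proof (t2 b (g2 w) b').
      chain HA.
    - pose proof (tot2 (g2 w) b); pose proof (t2 (g2 w) b' b); pose proof (tot2 b b');
      pose proof (F1b a b' w); pose proof (t2 b (g2 w) b'). chain HA. }
  unfold Sv, chi. destruct excluded_middle_informative as [Hc|Hc].
  - destruct (Cv_attain b a) as [E|[w E]]; rewrite E.
    + chain HA.
    + pose proof (F1b a b' w); pose proof (t2 b (g2 w) b'). chain HA.
  - specialize (Ho Hc). destruct (Cv_attain b a) as [E|[w E]]; rewrite E.
    + chain HA.
    + pose proof (F1b a b' w); pose proof (t2 b (g2 w) b'). chain HA.
Qed.

Lemma case7 a b b' : le (meet (r2 b b') (Sv b' a)) (Sv b a).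
Proof.
  assert (Ho : ~ le o (U a b') -> le (meet (r2 b b') o) (Sv b a)).
  { intro Hc. unfold Sv, chi. destruct excluded_middle_informative as [Hr|Hr]; [|chain HA].
    pose proof (case3 a b b').
    destruct (W a b' Hc) as [w [[X1 [X2 X3]]|[X1 [X2 X3]]]].
    - pose proof (tot1 a (g1 w)); pose proof (Cv_ge b a w); pose proof (t2 b b' (g2 w)). chain HA.
    - pose proof (tot2 (g2 w) b'); pose proof (Cv_ge b a w); pose proof (t2 b b' (g2 w)). chain HA. }
  unfold Sv at 1, chi at 1. destruct excluded_middle_informative as [Hc|Hc].
  - destruct (Cv_attain b' a) as [E|[w E]]; rewrite E.
    + chain HA.
    + pose proof (Cv_ge b a w); pose proof (t2 b b' (g2 w)). unfold Sv in *. chain HA.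
  - specialize (Ho Hc). destruct (Cv_attain b' a) as [E|[w E]]; rewrite E.
    + chain HA.
    + pose proof (Cv_ge b a w); pose proof (t2 b b' (g2 w)). unfold Sv in *. chain HA.
Qed.


Definition img1 a := exists z, g1 z = a.
Definition img2 b := exists z, g2 z = b.
Definition P2' := {b : dom M2 | ~ img2 b}.
Definition X3 := (dom M1 + P2')%type.

Definition c12 a b := match excluded_middle_informative (img1 a) with
  | left H => r2 (g2 (proj1_sig (constructive_indefinite_description _ H))) b
  | right _ => U a b end.
Definition c21 b a := match excluded_middle_informative (img1 a) with
  | left H => r2 b (g2 (proj1_sig (constructive_indefinite_description _ H)))
  | right _ => Sv b a end.

Lemma g1_inj z z' : g1 z = g1 z' -> z = z'.
Proof. apply E1. Qed.
Lemma g2_inj z z' : g2 z = g2 z' -> z = z'.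
Proof. apply E2. Qed.

Lemma c12_img z b : c12 (g1 z) b = r2 (g2 z) b.
Proof.
  unfold c12. destruct excluded_middle_informative as [H|H].
  - destruct (constructive_indefinite_description _ H) as [z' Hz']; simpl.
    apply g1_inj in Hz'. subst; reflexivity.
  - exfalso; apply H; exists z; reflexivity.
Qed.
Lemma c21_img z b : c21 b (g1 z) = r2 b (g2 z).
Proof.
  unfold c21. destruct excluded_middle_informative as [H|H].
  - destruct (constructive_indefinite_description _ H) as [z' Hz']; simpl.
    apply g1_inj in Hz'. subst; reflexivity.
  - exfalso; apply H; exists z; reflexivity.
Qed.
Lemma c12_nimg a b : ~ img1 a -> c12 a b = U a b.
Proof. unfold c12; destruct excluded_middle_informative; tauto. Qed.
Lemma c21_nimg a b : ~ img1 a -> c21 b a = Sv b a.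
Proof. unfold c21; destruct excluded_middle_informative; tauto. Qed.

Definition rel3 (x y : X3) : A :=
  match x, y with
  | inl a, inl a' => r1 a a'
  | inr b, inr b' => r2 (proj1_sig b) (proj1_sig b')
  | inl a, inr b => c12 a (proj1_sig b)
  | inr b, inl a => c21 (proj1_sig b) a
  end.

Definition M3 : Astr A := {| dom := X3; rel := rel3 |}.

Ltac imgcase a :=
  let z := fresh "z" in let Hn := fresh "Hn" in
  destruct (classic (img1 a)) as [[z <-]|Hn];
  [rewrite ?c12_img, ?c21_img | rewrite ?(c12_nimg a), ?(c21_nimg a) by exact Hn].

Lemma M3_tr (x y w : X3) : le (meet (rel3 x y) (rel3 y w)) (rel3 x w).
Proof.
  destruct x as [a|[b Hb]], y as [a'|[b' Hb']], w as [a''|[b'' Hb'']]; simpl.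
  - apply t1.
  - imgcase a; imgcase a'.
    + rewrite compat; apply t2.
    + apply F1b.
    + apply case2.
    + apply case1.
  - imgcase a; imgcase a''.
    + rewrite compat; apply t2.
    + apply case4_gen; intro w.
      * pose proof (t2 (g2 z) b' (g2 w)). rewrite <- compat in *. exact H.
      * pose proof (t2 (g2 w) (g2 z) b'). rewrite <- compat in *. exact H.
    + apply F1a.
    + apply case4_gen; [apply F1a | apply F1b].
  - imgcase a; apply t2 || apply case3.
  - imgcase a'; imgcase a''.
    + rewrite compat; apply t2.
    + eapply letr; [|apply jul]. apply Cv_ge.
    + apply (case6_gen _ _ _ (r2 (g2 z) b)).
      * intro w. pose proof (t2 b (g2 w) (g2 z)). rewrite <- compat in *. exact H.
      * intro H. destruct (tot2 b (g2 z)); tauto.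
      * apply case2.
    + apply (case6_gen _ _ _ (U a'' b)).
      * intro w. unfold Sv. eapply letr; [|apply jul]. apply Cv_ge.
      * intro H. unfold Sv, chi. destruct excluded_middle_informative; [tauto|]. apply jur.
      * apply case1.
  - imgcase a'; apply t2 || apply case5.
  - imgcase a''; apply t2 || apply case7.
  - apply t2.
Qed.

Lemma M3_K2 : K2 A M3.
Proof.
  pose proof K1 as [[l1 Hl1] [R1 _]]. pose proof K2' as [[l2 Hl2] [R2 _]].
  split; [|split; [|split]].
  - destruct (finite_sig (dom M2) (fun b => ~ img2 b) l2 Hl2) as [l2' Hl2'].
    exists (map inl l1 ++ map inr l2'). intros [a|b]; apply in_or_app.
    + left; apply in_map; auto.
    + right; apply in_map; auto.
  - intros [a|b]; simpl; auto.
  - intros x y w. apply (trans_iff A HA). apply M3_tr.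
  - intros [a|[b Hb]] [a'|[b' Hb']]; simpl.
    + destruct (tot1 a a'); [apply (le_trans A HA _ _ _ H); apply jul|
                              apply (le_trans A HA _ _ _ H); apply jur].
    + imgcase a.
      * destruct (tot2 (g2 z) b'); [apply (le_trans A HA _ _ _ H); apply jul|
                              apply (le_trans A HA _ _ _ H); apply jur].
      * destruct (classic (le o (U a b'))) as [H|H].
        -- apply (le_trans A HA _ _ _ H); apply jul.
        -- eapply letr; [|apply jur]. unfold Sv, chi.
           destruct excluded_middle_informative; [tauto|]. apply jur.
    + imgcase a'.
      * destruct (tot2 b (g2 z)); [apply (le_trans A HA _ _ _ H); apply jul|
                              apply (le_trans A HA _ _ _ H); apply jur].
      * destruct (classic (le o (U a' b))) as [H|H].
        -- apply (le_trans A HA _ _ _ H); apply jur.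
        -- eapply letr; [|apply jul]. unfold Sv, chi.
           destruct excluded_middle_informative; [tauto|]. apply jur.
    + destruct (tot2 b b'); [apply (le_trans A HA _ _ _ H); apply jul|
                              apply (le_trans A HA _ _ _ H); apply jur].
Qed.

Definition f1 (a : dom M1) : dom M3 := inl a.
Definition f2 (b : dom M2) : dom M3 :=
  match excluded_middle_informative (img2 b) with
  | left H => inl (g1 (proj1_sig (constructive_indefinite_description _ H)))
  | right H => inr (exist _ b H)
  end.

Lemma f2_spec b : (exists z, g2 z = b /\ f2 b = inl (g1 z)) \/
                  (exists H : ~ img2 b, f2 b = inr (exist _ b H)).
Proof.
  unfold f2. destruct excluded_middle_informative as [H|H].
  - left. destruct (constructive_indefinite_description _ H) as [z Hz]; simpl. eauto.
  - right. eauto.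
Qed.

Lemma f1_emb : is_embedding M1 M3 f1.
Proof. split; [intros a b H; injection H; auto | reflexivity]. Qed.

Lemma f2_emb : is_embedding M2 M3 f2.
Proof.
  split.
  - intros b b' H. destruct (f2_spec b) as [[z [<- E]]|[Hb E]];
      destruct (f2_spec b') as [[z' [<- E']]|[Hb' E']]; rewrite E, E' in H;
      try discriminate; injection H; intro H'.
    + apply g1_inj in H'; subst; reflexivity.
    + exact H'.
  - intros b b'. destruct (f2_spec b) as [[z [<- E]]|[Hb E]];
      destruct (f2_spec b') as [[z' [<- E']]|[Hb' E']]; rewrite E, E'; simpl.
    + apply compat.
    + apply c12_img.
    + apply c21_img.
    + reflexivity.
Qed.

Lemma f12 x : f1 (g1 x) = f2 (g2 x).
Proof.
  destruct (f2_spec (g2 x)) as [[z [Hz E]]|[Hb E]]; rewrite E.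
  - apply g2_inj in Hz; subst; reflexivity.
  - exfalso; apply Hb; exists x; reflexivity.
Qed.

End AP.

Lemma AP_thm (A : ULAlg) (HA : is_UL_chain A) : forall M0 M1 M2 (g1 : dom M0 -> dom M1) (g2 : dom M0 -> dom M2),
      K2 A M0 -> K2 A M1 -> K2 A M2 ->
      is_embedding M0 M1 g1 -> is_embedding M0 M2 g2 ->
      exists M3 (f1 : dom M1 -> dom M3) (f2 : dom M2 -> dom M3),
        K2 A M3 /\ is_embedding M1 M3 f1 /\ is_embedding M2 M3 f2 /\
        forall x : dom M0, f1 (g1 x) = f2 (g2 x).
Proof.
  intros M0 M1 M2 g1 g2 K0 K1 K2' E1 E2.
  destruct K0 as [[l0 Hl0] _].
  exists (M3 A M0 M1 M2 g1 g2 l0).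
  exists (f1 A M0 M1 M2 g1 g2 l0), (f2 A M0 M1 M2 g1 g2 l0).
  split; [|split; [|split]].
  - apply M3_K2; auto.
  - apply f1_emb.
  - apply f2_emb; auto.
  - intro x; apply f12; auto.
Qed.

Definition E0 (A : ULAlg) : Astr A :=
  {| dom := Empty_set; rel := fun x _ => match x with end |}.

Lemma E0_K2 A : K2 A (E0 A).
Proof.
  split; [exists nil; intros []|]. split; [intros []|]. split; intros [].
Qed.

Lemma iso_K2 A (M N : Astr A) : isomorphic M N -> K2 A M -> K2 A N.
Proof.
  intros [f [[Hinj Hrel] Hsurj]] [[l Hl] [R [T To]]].
  split; [|split; [|split]].
  - exists (map f l). intro y. destruct (Hsurj y) as [x <-]. apply in_map; auto.
  - intro y. destruct (Hsurj y) as [x <-]. rewrite Hrel; auto.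
  - intros y1 y2 y3. destruct (Hsurj y1) as [x1 <-]. destruct (Hsurj y2) as [x2 <-].
    destruct (Hsurj y3) as [x3 <-]. rewrite !Hrel; auto.
  - intros y1 y2. destruct (Hsurj y1) as [x1 <-]. destruct (Hsurj y2) as [x2 <-].
    rewrite !Hrel; auto.
Qed.

Fixpoint dec (k c : nat) : list nat :=
  match k with 0 => nil | S k' => fst (of_nat c) :: dec k' (snd (of_nat c)) end.
Definition decl (n : nat) := dec (fst (of_nat n)) (snd (of_nat n)).

Lemma dec_surj l : exists c, dec (length l) c = l.
Proof.
  induction l as [|x l [c IH]]; [exists 0; reflexivity|].
  exists (to_nat (x, c)). cbn -[of_nat to_nat]. rewrite cancel_of_to. cbn -[of_nat to_nat]. rewrite IH. reflexivity.
Qed.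

Lemma decl_surj l : exists n, decl n = l.
Proof.
  destruct (dec_surj l) as [c H]. exists (to_nat (length l, c)).
  unfold decl. rewrite cancel_of_to. exact H.
Qed.

Definition decll n := map decl (decl n).

Lemma decll_surj LL : exists n, decll n = LL.
Proof.
  assert (H : exists ns, map decl ns = LL).
  { induction LL as [|l LL [ns IH]]; [exists nil; reflexivity|].
    destruct (decl_surj l) as [m Hm]. exists (m :: ns). simpl; rewrite Hm, IH; reflexivity. }
  destruct H as [ns H]. destruct (decl_surj ns) as [n Hn]. exists n.
  unfold decll. rewrite Hn. exact H.
Qed.

Definition Sn (A : ULAlg) (e : nat -> A) (LL : list (list nat)) : Astr A :=
  {| dom := {i : nat | i < length LL};
     rel := fun i j => e (nth (proj1_sig j) (nth (proj1_sig i) LL nil) 0) |}.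

Lemma sig_ext k (a b : {i : nat | i < k}) : proj1_sig a = proj1_sig b -> a = b.
Proof. destruct a, b; simpl; intro; subst; f_equal; apply proof_irrelevance. Qed.

Lemma count_iso (A : ULAlg) (e : nat -> A) (He : forall x, exists n, e n = x) (M : Astr A) :
  finite_str M -> exists LL, isomorphic M (Sn A e LL).
Proof.
  intros [l Hl].
  set (g := fun v : A => proj1_sig (constructive_indefinite_description _ (He v))).
  assert (Hg : forall v, e (g v) = v).
  { intro v. unfold g. destruct constructive_indefinite_description; auto. }
  set (dd := fun x y : dom M => excluded_middle_informative (x = y)).
  set (l' := nodup dd l).
  assert (Hin : forall x, In x l') by (intro x; apply nodup_In; auto).
  assert (Hnd : NoDup l') by apply NoDup_nodup.
  set (F := fun x => map (fun y => g (rel M x y)) l').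
  exists (map F l').
  set (idx := fun x => proj1_sig (constructive_indefinite_description _ (In_nth l' x x (Hin x)))).
  assert (Hidx : forall x, idx x < length l' /\ nth (idx x) l' x = x).
  { intro x. unfold idx. destruct constructive_indefinite_description; auto. }
  assert (Hlen : length (map F l') = length l') by apply length_map.
  assert (Hk : forall x, idx x < length (map F l')).
  { intro x. rewrite Hlen. apply Hidx. }
  exists (fun x => exist _ (idx x) (Hk x)).
  split; [split|].
  - intros x y H. apply (f_equal (@proj1_sig _ _)) in H. simpl in H.
    destruct (Hidx x) as [H1 H2]. destruct (Hidx y) as [H3 H4].
    rewrite <- H2, <- H4, H. apply nth_indep. rewrite <- H; auto.
  - intros x y. simpl.
    destruct (Hidx x) as [H1 H2]. destruct (Hidx y) as [H3 H4].
    rewrite (nth_indep _ nil (F x)) by (rewrite Hlen; auto).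
    rewrite map_nth, H2. unfold F.
    rewrite (nth_indep _ 0 (g (rel M x y))) by (rewrite length_map; auto).
    rewrite (map_nth (fun y0 => g (rel M x y0)) l' y), H4. apply Hg.
  - intros [i Hi]. assert (Hi' : i < length l') by (rewrite <- Hlen; exact Hi).
    assert (d : dom M) by (destruct l' as [|d ?]; [simpl in Hi'; lia|exact d]).
    exists (nth i l' d). apply sig_ext. simpl.
    destruct (Hidx (nth i l' d)) as [H1 H2].
    apply (proj1 (NoDup_nth l' d) Hnd); auto.
    rewrite <- H2 at 2. apply nth_indep; auto.
Qed.

Theorem proposition3 (A : ULAlg) (HA : is_UL_chain A) (Hc : countable_carrier A) :
  Fraisse_class (K2 A).
Proof.
  destruct Hc as [e He].
  split; [|split; [|split; [|split]]].
  - exists (fun n => match excluded_middle_informative (K2 A (Sn A e (decll n))) with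
                     | left _ => Sn A e (decll n) | right _ => E0 A end).
    split.
    + intro n. destruct excluded_middle_informative; auto. apply E0_K2.
    + intros M HM. destruct (count_iso A e He M (proj1 HM)) as [LL Hiso].
      destruct (decll_surj LL) as [n Hn]. exists n. rewrite Hn.
      destruct excluded_middle_informative as [_|N]; auto.
      exfalso; apply N. eapply iso_K2; eauto.
  - intros M HM; apply HM.
  - intros M P HM. exists (substr M P). split.
    + destruct HM as [[l Hl] [R [T To]]]. split; [|split; [|split]].
      * apply (finite_sig _ P l Hl).
      * intros [a pa]; simpl; auto.
      * intros [a pa] [b pb] [c pc]; simpl; auto.
      * intros [a pa] [b pb]; simpl; auto.
    + exists (fun x => x). split; [split|]; eauto.
  - intros M1 M2 K1 K2'.
    destruct (AP_thm A HA (E0 A) M1 M2 (fun x => match x with end) (fun x => match x with end)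
                (E0_K2 A) K1 K2') as [M3 [f1 [f2 [H3 [H1 [H2 _]]]]]];
      [split; intros []|split; intros []|].
    exists M3, f1, f2; auto.
  - apply AP_thm; auto.
Qed.
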